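(* Let $p$ be a prime and $G$ a finite $p$-group in which every non-abelian subgroup $H$ satisfies $C_G(H)\le H$. If $g\in G\setminus\Phi(G)$, then $C_G(g)$ is abelian.
   Context: $\Phi(G)$ denotes the Frattini subgroup of $G$ and $C_G(\cdot)$ centralizers. *)

(* Defs.v *)
From mathcomp Require Import all_boot all_fingroup all_solvable.

(* Main.v *)
Require Import Defs.
From mathcomp Require Import all_boot all_fingroup all_solvable.
Local Open Scope group_scope.

Theorem lemma6p8 (gT : finGroupType) (p : nat) (G : {group gT})
  (pr_p : prime p) (pG : p.-group G)
  (hyp : forall H : {group gT}, H \subset G -> ~~ abelian H -> 'C_G(H) \subset H)
  (g : gT) (gG : g \in G :\: 'Phi(G)) :
  abelian 'C_G[g].
Proof.
case/setDP: gG => gG gPhi.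
case: (pickP (fun M : {group gT} => maximal M G && (g \notin M)))
  => [M /andP[maxM gM] | none]; last first.
  case/negP: gPhi; apply/bigcapP => M; rewrite /maximal_eq => /orP [/eqP eMG | maxM]; first by rewrite eMG.
  by have := none M; rewrite maxM /= => /negbFE.
have nMG := p_maximal_normal pG maxM.
have sMG := normal_sub nMG.
have sgG : <[g]> \subset G by rewrite cycle_subG.
have defG : M * <[g]> = G.
  by apply: mulg_normal_maximal => //; rewrite cycle_subG.
set H := 'C_G[g] :&: M.
have sgC : <[g]> \subset 'C_G[g].
  by rewrite cycle_subG inE gG cent1id.
have defC : 'C_G[g] = H * <[g]>.
  have := group_modr M sgC; rewrite defG /H => ->.
  by apply/esym/setIidPl; exact: subsetIl.
have HcG : g \in 'C(H).
  apply/centP => x /setIP[/setIP[_ cxg] _].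
  by move/cent1P: cxg => c; rewrite /commute c.
have [abH | nabH] := boolP (abelian H).
  by rewrite defC abelianM abH cycle_abelian /= cycle_subG.
have sHG : H \subset G by rewrite /H subIset // subsetIl.
have := hyp [group of H] sHG nabH.
move/subsetP/(_ g); rewrite inE gG HcG /= => /(_ isT).
by move=> /setIP[_ gM2]; rewrite gM2 in gM.
Qed.
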